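(* Let $\mathcal{T}=(Q,E,I,F,f)$ be a transducer that does not satisfy the weak twinning property. Then there exist states $q_1,q_2$, words $u,v\in\Sigma^*$ and $u_1,u_2,v_1,v_2\in\Gamma^*$ with runs $q_1\xrightarrow{u\mid u_1}q_1\xrightarrow{v\mid v_1}q_1\xrightarrow{u\mid u_2}q_2\xrightarrow{v\mid v_2}q_2$ such that for every $n\in\mathbb{N}$, $|\Delta(u_1v_1^n,u_2v_2^n)|\ge n$.
   Context: A transducer has finite state set $Q$, initial states $I$, final states $F$, transitions $E\subseteq Q\times\Sigma\times\Gamma^*\times Q$ and final output $f:F\to\Gamma^*$. We write $p\xrightarrow{u\mid w}q$ if there is a run from $p$ to $q$ reading $u$ and outputting $w$. $\Delta(v,w)=v^{-1}w$ is computed in the free group over $\Gamma$, and $|\cdot|$ of a free-group element is the length of its reduced word over $\Gamma\cup\Gamma^{-1}$. The transducer satisfies the weak twinning property if for all states $q_1,q_2$, all $u,v\in\Sigma^*$ and $u_1,u_2,v_1,v_2\in\Gamma^*$ with $q_1\xrightarrow{u\mid u_1}q_1$, $q_1\xrightarrow{v\mid v_1}q_1$, $q_1\xrightarrow{u\mid u_2}q_2$, $q_2\xrightarrow{v\mid v_2}q_2$, one has $\Delta(u_1,u_2)=\Delta(u_1v_1,u_2v_2)$. *)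

(* Defs.v *)
From mathcomp Require Import all_boot.
Set Implicit Arguments. Unset Strict Implicit. Unset Printing Implicit Defensive.

Record transducer (Q Sigma Gamma : finType) := Transducer {
  trans  : seq (Q * Sigma * seq Gamma * Q);
  init   : {set Q};
  final  : {set Q};
  fout   : Q -> seq Gamma                      (* f (only meaningful on F) *)
}.

Inductive run (Q Sigma Gamma : finType) (T : transducer Q Sigma Gamma)
  : Q -> seq Sigma -> seq Gamma -> Q -> Prop :=
| run_nil p : run T p [::] [::] p
| run_cons p a x r u w q :
    (p, a, x, r) \in trans T -> run T r u w q -> run T p (a :: u) (x ++ w) q.

(* Free group over Gamma: words over Gamma ∪ Gamma^{-1}; a letter (b, g)
   stands for g if b = true and g^{-1} if b = false. *)
Definition fletter (Gamma : finType) := (bool * Gamma)%type.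

Definition fg_reduce (Gamma : finType) (s : seq (fletter Gamma)) : seq (fletter Gamma) :=
  foldr (fun x acc => match acc with
                      | y :: t => if (y.2 == x.2) && (y.1 != x.1) then t else x :: acc
                      | [::] => [:: x]
                      end) [::] s.

Definition pos_word (Gamma : finType) (w : seq Gamma) : seq (fletter Gamma) :=
  [seq (true, g) | g <- w].

Definition fg_inv (Gamma : finType) (s : seq (fletter Gamma)) : seq (fletter Gamma) :=
  rev [seq (~~ x.1, x.2) | x <- s].

Definition Delta (Gamma : finType) (v w : seq Gamma) : seq (fletter Gamma) :=
  fg_reduce (fg_inv (pos_word v) ++ pos_word w).

Definition fg_len (Gamma : finType) (x : seq (fletter Gamma)) : nat := size (fg_reduce x).

Definition wpow (A : Type) (w : seq A) (n : nat) : seq A := flatten (nseq n w).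

Definition weak_twinning (Q Sigma Gamma : finType) (T : transducer Q Sigma Gamma) : Prop :=
  forall (q1 q2 : Q) (u v : seq Sigma) (u1 u2 v1 v2 : seq Gamma),
    run T q1 u u1 q1 -> run T q1 v v1 q1 ->
    run T q1 u u2 q2 -> run T q2 v v2 q2 ->
    Delta u1 u2 = Delta (u1 ++ v1) (u2 ++ v2).

(* Main.v *)
Require Import Defs.
From mathcomp Require Import all_boot.
From mathcomp Require Import zify.
From Stdlib Require Import Classical.

Section Aux.
Variable G : finType.
Implicit Types a b c s t w : seq G.

Fixpoint strip a b : seq G * seq G :=
  match a, b with
  | x :: a', y :: b' => if x == y then strip a' b' else (a, b)
  | _, _ => (a, b)
  end.

Fixpoint lcp a b : nat :=
  match a, b with
  | x :: a', y :: b' => if x == y then (lcp a' b').+1 else 0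
  | _, _ => 0
  end.

Lemma strip_lcp a b : strip a b = (drop (lcp a b) a, drop (lcp a b) b).
Proof.
elim: a b => [|x a IH] [|y b] //=; case: (x == y) => //; exact: IH.
Qed.

Lemma lcp_le a b : lcp a b <= size a /\ lcp a b <= size b.
Proof.
elim: a b => [|x a IH] [|y b] //=; case: (x == y) => //=.
by have [h1 h2] := IH b.
Qed.

Lemma lcp_take a b : take (lcp a b) a = take (lcp a b) b.
Proof.
elim: a b => [|x a IH] [|y b] //=; case: eqP => //= ->; by rewrite IH.
Qed.

Lemma strip_cat c a b : strip (c ++ a) (c ++ b) = strip a b.
Proof. by elim: c => //= x c IH; rewrite eqxx. Qed.

Lemma strip_pre c b : strip c (c ++ b) = ([::], b).
Proof. by elim: c => [|x c IH] /=; [case: b|rewrite eqxx]. Qed.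

Lemma strip_nil b : strip [::] b = ([::], b).
Proof. by case: b. Qed.

Lemma strip_sym a b : strip b a = ((strip a b).2, (strip a b).1).
Proof.
elim: a b => [|x a IH] [|y b] //=; rewrite eq_sym; case: (x == y) => //.
Qed.

Lemma strip_idem a b : strip (strip a b).1 (strip a b).2 = strip a b.
Proof.
elim: a b => [|x a IH] [|y b] //=; case: eqP => //= ne.
by case: eqP.
Qed.

Definition redstep (x : fletter G) (acc : seq (fletter G)) :=
  match acc with
  | y :: t => if (y.2 == x.2) && (y.1 != x.1) then t else x :: acc
  | [::] => [:: x]
  end.

Lemma fg_reduceE (s : seq (fletter G)) : fg_reduce s = foldr redstep [::] s.
Proof. by []. Qed.

Lemma red_pos b : fg_reduce (pos_word b) = pos_word b.
Proof.
elim: b => //= x b IH; rewrite fg_reduceE /= -fg_reduceE IH.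
by case: b {IH} => //= y b; rewrite andbF.
Qed.

Lemma fg_inv_cons x a :
  fg_inv (pos_word (x :: a)) = fg_inv (pos_word a) ++ [:: (false, x)].
Proof. by rewrite /fg_inv /= rev_cons cats1. Qed.

Lemma red_neg a z (t : seq (fletter G)) :
  foldr redstep ((false, z) :: t) (fg_inv (pos_word a))
  = fg_inv (pos_word a) ++ (false, z) :: t.
Proof.
elim: a z t => //= x a IH z t.
by rewrite fg_inv_cons foldr_cat /= andbF IH -catA.
Qed.

Lemma red_main a b :
  foldr redstep (pos_word b) (fg_inv (pos_word a))
  = fg_inv (pos_word (strip a b).1) ++ pos_word (strip a b).2.
Proof.
elim: a b => [|x a IH] b; first by rewrite strip_nil.
rewrite fg_inv_cons foldr_cat.
case: b => [|y b] /=.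
  by rewrite red_neg fg_inv_cons cats0.
have [<-|ne] := eqVneq x y.
  exact: IH.
rewrite /=.
have -> : ((false, x) :: (true, y) :: pos_word b) = (false, x) :: pos_word (y :: b) by [].
by rewrite red_neg fg_inv_cons -catA.
Qed.

Lemma DeltaE a b :
  Delta a b = fg_inv (pos_word (strip a b).1) ++ pos_word (strip a b).2.
Proof.
by rewrite /Delta fg_reduceE foldr_cat -fg_reduceE red_pos red_main.
Qed.

Lemma fg_len_Delta a b : fg_len (Delta a b) = size a + size b - 2 * lcp a b.
Proof.
rewrite /fg_len {1}DeltaE -/(Delta _ _) DeltaE strip_idem strip_lcp /=.
rewrite size_cat /fg_inv size_rev !size_map !size_drop.
have [h1 h2] := lcp_le a b; lia.
Qed.

Lemma wpowS (A : Type) (w : seq A) n : wpow w n.+1 = w ++ wpow w n.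
Proof. by []. Qed.
Lemma wpow0 (A : Type) (w : seq A) : wpow w 0 = [::].
Proof. by []. Qed.

Lemma size_wpow (A : Type) (w : seq A) n : size (wpow w n) = n * size w.
Proof. elim: n => [|n IH]; first by []. by rewrite wpowS size_cat IH mulSn. Qed.

Lemma wpowSr (A : Type) (w : seq A) n : wpow w n.+1 = wpow w n ++ w.
Proof.
elim: n => [|n IH]; first by rewrite wpowS wpow0 cats0.
by rewrite [LHS]wpowS [in LHS]IH catA.
Qed.

Lemma wpowD (A : Type) (w : seq A) m n : wpow w (m + n) = wpow w m ++ wpow w n.
Proof. elim: m => [|m IH]; first by []. by rewrite addSn !wpowS IH catA. Qed.

Lemma wpow_mul (A : Type) (w : seq A) k n : wpow (wpow w k) n = wpow w (n * k).
Proof. elim: n => [|n IH]; first by []. by rewrite wpowS IH mulSn wpowD. Qed.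

Lemma core (u1 u2 v1 v2 : seq G) N :
  size v1 = size v2 -> 0 < size v1 -> size u1 <= size u2 ->
  size u2 + size v1 <= size (u1 ++ wpow v1 N) ->
  size u2 + size v1 <= size (u2 ++ wpow v2 N) ->
  take (size u2 + size v1) (u1 ++ wpow v1 N) =
  take (size u2 + size v1) (u2 ++ wpow v2 N) ->
  strip u1 u2 = strip (u1 ++ v1) (u2 ++ v2).
Proof.
move=> e12 L0 le12 s1 s2 H.
rewrite !size_cat !size_wpow in s1 s2.
case: N H s1 s2 => [|N] H s1 s2; first by lia.
rewrite !wpowS in H.
set m := size u2 - size u1.
set W1 := wpow v1 N.
have sW1 : size W1 = N * size v1 by rewrite size_wpow.
set w := take m W1.
rewrite [in RHS]catA [in RHS]take_size_cat in H; last by rewrite size_cat e12.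
have HL : take (size u2 + size v1) (u1 ++ v1 ++ W1) = u1 ++ v1 ++ w.
  rewrite catA take_cat size_cat.
  have -> : (size u2 + size v1 < size u1 + size v1) = false by lia.
  have -> : size u2 + size v1 - (size u1 + size v1) = m by rewrite /m; lia.
  by rewrite -catA.
rewrite HL in H.
have Hw : take m (v1 ++ w) = w.
  have -> : v1 ++ w = take (size v1 + m) (v1 ++ W1).
    by rewrite take_cat ltnNge leq_addr /= addKn.
  rewrite /W1 -wpowS wpowSr take_takel ?leq_addl //.
  by rewrite takel_cat // sW1; lia.
have Hu2 : u2 = u1 ++ w.
  have := congr1 (take (size u2)) H.
  rewrite (@take_size_cat _ _ u2 v2 erefl) take_cat.
  have -> : (size u2 < size u1) = false by lia.
  by rewrite -/m Hw => ->.
by rewrite -H Hu2 catA !strip_pre.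
Qed.

Lemma core2 (u1 u2 v1 v2 : seq G) N :
  size v1 = size v2 -> 0 < size v1 ->
  size u1 + size u2 + size v1 <= lcp (u1 ++ wpow v1 N) (u2 ++ wpow v2 N) ->
  strip u1 u2 = strip (u1 ++ v1) (u2 ++ v2).
Proof.
move=> e12 L0 hl.
have [la lb] := lcp_le (u1 ++ wpow v1 N) (u2 ++ wpow v2 N).
have ht := lcp_take (u1 ++ wpow v1 N) (u2 ++ wpow v2 N).
have hC : forall C, C <= size u1 + size u2 + size v1 ->
    take C (u1 ++ wpow v1 N) = take C (u2 ++ wpow v2 N).
  move=> C hC.
  have hCl : C <= lcp (u1 ++ wpow v1 N) (u2 ++ wpow v2 N) by lia.
  by rewrite -(take_takel _ hCl) ht take_takel.
have [le12|lt21] := leqP (size u1) (size u2).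
  apply: (@core _ _ _ _ N) => //; try lia.
  by apply: hC; lia.
have := @core u2 u1 v2 v1 N (esym e12) ltac:(lia) ltac:(lia) ltac:(lia) ltac:(lia).
rewrite -e12 => /(_ (esym (hC (size u1 + size v1) ltac:(lia)))).
move=> h; by rewrite [strip u1 u2]strip_sym [strip (u1 ++ v1) _]strip_sym h.
Qed.

Lemma bound (u1 u2 v1 v2 : seq G) :
  Delta u1 u2 <> Delta (u1 ++ v1) (u2 ++ v2) ->
  exists C, forall n, n <= fg_len (Delta (u1 ++ wpow v1 n) (u2 ++ wpow v2 n)) + C.
Proof.
move=> hne.
have [e12|ne12] := eqVneq (size v1) (size v2).
  have L0 : 0 < size v1.
    case: v1 e12 hne => [|x v1] // e12; case: v2 e12 => // _.
    by rewrite !cats0.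
  exists (2 * (size u1 + size u2 + size v1)) => n.
  rewrite fg_len_Delta.
  set a := u1 ++ wpow v1 n; set b := u2 ++ wpow v2 n.
  have hl : lcp a b < size u1 + size u2 + size v1.
    rewrite ltnNge; apply/negP => hl; apply: hne.
    by rewrite !DeltaE (@core2 u1 u2 v1 v2 n e12 L0 hl).
  have [la lb] := lcp_le a b.
  rewrite /a /b !size_cat !size_wpow -e12 in la lb *.
  rewrite /a /b in hl; nia.
exists (size u1 + size u2) => n.
rewrite fg_len_Delta.
set a := u1 ++ wpow v1 n; set b := u2 ++ wpow v2 n.
have [la lb] := lcp_le a b.
rewrite /a /b !size_cat !size_wpow in la lb *.
have [h|h] : size v1 < size v2 \/ size v2 < size v1 by move: ne12; lia.
  have : n * size v1 + n <= n * size v2 by nia.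
  lia.
have : n * size v2 + n <= n * size v1 by nia.
lia.
Qed.

End Aux.

Lemma run_cat (Q Sigma Gamma : finType) (T : transducer Q Sigma Gamma) p u w q u' w' r :
  run T p u w q -> run T q u' w' r -> run T p (u ++ u') (w ++ w') r.
Proof.
elim=> [//|p0 a x r0 u0 w0 q0 hin _ IH] h.
rewrite -catA /=; apply: run_cons hin _; exact: IH.
Qed.

Lemma run_wpow (Q Sigma Gamma : finType) (T : transducer Q Sigma Gamma) q v w k :
  run T q v w q -> run T q (wpow v k) (wpow w k) q.
Proof.
move=> h; elim: k => [|k IH]; first exact: run_nil.
rewrite !wpowS; exact: run_cat h IH.
Qed.


Theorem lemma8 (Q Sigma Gamma : finType) (T : transducer Q Sigma Gamma) :
  ~ weak_twinning T ->
  exists (q1 q2 : Q) (u v : seq Sigma) (u1 u2 v1 v2 : seq Gamma),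
    [/\ run T q1 u u1 q1, run T q1 v v1 q1, run T q1 u u2 q2, run T q2 v v2 q2 &
        forall n : nat, n <= fg_len (Delta (u1 ++ wpow v1 n) (u2 ++ wpow v2 n))].
Proof.
move=> H.
have [q1 [q2 [u [v [u1 [u2 [v1 [v2 [r1 r2 r3 r4 hne]]]]]]]]] :
  exists q1 q2 u v u1 u2 v1 v2,
    [/\ run T q1 u u1 q1, run T q1 v v1 q1, run T q1 u u2 q2, run T q2 v v2 q2 &
        Delta u1 u2 <> Delta (u1 ++ v1) (u2 ++ v2)].
  apply: NNPP => hno; apply: H => q1 q2 u v u1 u2 v1 v2 r1 r2 r3 r4.
  apply: NNPP => hne; apply: hno.
  by exists q1, q2, u, v, u1, u2, v1, v2.
have [C hC] := @bound _ u1 u2 v1 v2 hne.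
exists q1, q2, u, (wpow v C.+1), u1, u2, (wpow v1 C.+1), (wpow v2 C.+1).
split => //; try exact: run_wpow.
move=> n; rewrite !wpow_mul.
have := hC (n * C.+1).
case: n => [|n] //; nia.
Qed.
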